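(* For every $n \geq 2$, $n-1$ divides $d_{n1}$.
   Context: A linear arrangement of $\{1,\ldots,n\}$ is a sequence $a_1\cdots a_n$ in which each of $1,\ldots,n$ appears exactly once. It contains the pattern $ij$ if $a_t=i$ and $a_{t+1}=j$ for some $t$; otherwise it avoids it. $d_{n1}$ is the number of linear arrangements of $\{1,\ldots,n\}$ that avoid all of the patterns $12, 23, \ldots, (n-1)n$ and contain the pattern $n1$. *)

(* Defs.v *)
From mathcomp Require Import all_boot.
Set Implicit Arguments. Unset Strict Implicit. Unset Printing Implicit Defensive.

Definition linear_arrangement (n : nat) (s : seq nat) : bool :=
  perm_eq s (iota 1 n).

Definition contains_pattern (s : seq nat) (i j : nat) : bool :=
  has (fun t => (nth 0 s t == i) && (nth 0 s t.+1 == j)) (iota 0 (size s).-1).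

(* d_{n1}: arrangements avoiding 12, 23, ..., (n-1)n and containing n1.
   permutations (iota 1 n) enumerates each arrangement exactly once. *)
Definition d_n1 (n : nat) : nat :=
  count (fun s => linear_arrangement n s
                  && all (fun i => ~~ contains_pattern s i i.+1) (iota 1 n.-1)
                  && contains_pattern s n 1)
        (permutations (iota 1 n)).

(* Main.v *)
Require Import Defs.
From mathcomp Require Import all_boot zify.

Fixpoint prs (s : seq nat) : seq (nat * nat) :=
  match s with
  | x :: s' => if s' is y :: _ then (x, y) :: prs s' else [::]
  | [::] => [::]
  end.

Lemma cpE s i j : contains_pattern s i j = ((i, j) \in prs s).
Proof.
rewrite /contains_pattern.
elim: s => [|x s IH] //=.
case: s IH => [|y s] IH //=.
rewrite -[X in _ \in (x, y) :: X]/(prs (y :: s)) -[1]/(1 + 0) iotaDl has_map in_cons -IH /= xpair_eqE [i == x]eq_sym [j == y]eq_sym.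
congr (_ || _); apply: eq_has => t /=; by [].
Qed.

Lemma prs_mem s a b : (a, b) \in prs s -> (a \in s) && (b \in behead s).
Proof.
elim: s => [|x s IH] //=.
case: s IH => [|y s] IH //=.
rewrite in_cons => /orP [/eqP [-> ->]|/IH /andP [H1 H2]].
  by rewrite !inE !eqxx /= ?orbT.
by rewrite inE H1 orbT /= (mem_behead H2).
Qed.

Lemma prs_split s a b : (a, b) \in prs s -> exists s1 s2, s = s1 ++ a :: b :: s2.
Proof.
elim: s => [|x s IH] //=.
case: s IH => [|y s] IH //=.
rewrite in_cons => /orP [/eqP [-> ->]|/IH [s1 [s2 E]]].
  by exists [::], s.
by exists (x :: s1), s2; rewrite E.
Qed.

Lemma prs_cat s1 x s2 : prs (s1 ++ x :: s2) = prs (rcons s1 x) ++ prs (x :: s2).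
Proof.
elim: s1 => [|a s1 IH] //=.
rewrite IH; case: s1 {IH} => [|b s1] //=.
Qed.

Lemma prs_rcons2 s x y : prs (rcons (rcons s x) y) = prs (rcons s x) ++ [:: (x, y)].
Proof.
have -> : rcons (rcons s x) y = s ++ x :: [:: y] by rewrite -!cats1 -catA.
by rewrite prs_cat.
Qed.

Lemma prs_map (g : nat -> nat) s : prs (map g s) = map (fun p => (g p.1, g p.2)) (prs s).
Proof.
elim: s => [|x s IH] //=.
case: s IH => [|y s] IH //=.
by rewrite -IH.
Qed.

Lemma rem_cat_notin (x : nat) s1 s2 : x \notin s1 -> rem x (s1 ++ x :: s2) = s1 ++ s2.
Proof.
elim: s1 => [|a s1 IH] /=; first by rewrite eqxx.
rewrite inE negb_or => /andP [H1 H2].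
by rewrite eq_sym (negbTE H1) IH.
Qed.

Definition ep (p : nat * nat) : bool := p.2 != p.1.+1.
Definition cc (m a : nat) : nat := if a == m then 1 else a.+1.
Definition fp (m : nat) (p : nat * nat) : bool := p.2 != cc m p.1.

Lemma ef m a b : b != 1 -> b != m.+1 -> ep (a, b) = fp m (a, b).
Proof.
rewrite /ep /fp /cc /=; case: (a =P m) => [->|] // H1 H2.
by rewrite ?eqxx (negbTE H1) (negbTE H2).
Qed.

Lemma key m s1 s2 : uniq (s1 ++ m.+1 :: 1 :: s2) -> 0 \notin s1 ->
  all ep (prs (s1 ++ m.+1 :: 1 :: s2)) = all (fp m) (prs (s1 ++ 1 :: s2)).
Proof.
rewrite cat_uniq /= !inE !negb_or => /and3P [_ Hs /andP [/andP [Hn1 Hn2] /andP [H12 _]]] H0.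
case/and3P: Hs => Hn1s H1s _.
rewrite !prs_cat /= !all_cat /=.
have -> : all ep (prs (1 :: s2)) = all (fp m) (prs (1 :: s2)).
  apply: eq_in_all => [[a b]] /prs_mem /andP [_ Hb] /=.
  by apply: ef; apply/eqP => Eb; subst b; [rewrite Hb in H12 | rewrite Hb in Hn2].
congr (_ && _); case/lastP: s1 Hn1s H1s H0 => [|s1 l] //= Hn1s H1s H0.
rewrite !prs_rcons2 !all_cat /=.
have -> : all ep (prs (rcons s1 l)) = all (fp m) (prs (rcons s1 l)).
  apply: eq_in_all => [[a b]] /prs_mem /andP [_ /mem_behead Hb] /=.
  by apply: ef; apply/eqP => Eb; subst b; [rewrite Hb in H1s | rewrite Hb in Hn1s].
congr (_ && _).
have Hl : l != 0 by apply: contraNneq H0 => ->; rewrite mem_rcons inE eqxx.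
rewrite !andbT /ep /fp /cc /=; case: (l =P m) => [->|Hlm]; first by rewrite !eqxx.
by apply/idP/idP => _; apply/eqP; lia.
Qed.

Lemma count_le (S1 S2 : seq (seq nat)) (P Q : pred (seq nat)) (g g' : seq nat -> seq nat) :
  uniq S1 -> (forall x, x \in S1 -> P x -> (g x \in S2) && Q (g x)) ->
  (forall x, x \in S1 -> P x -> g' (g x) = x) -> count P S1 <= count Q S2.
Proof.
move=> U H K; rewrite -!size_filter -(size_map g).
apply: uniq_leq_size.
  rewrite map_inj_in_uniq ?filter_uniq //.
  apply: (@can_in_inj _ _ _ _ g') => x; rewrite mem_filter => /andP [Px Sx].
  exact: K.
move=> y /mapP [x]; rewrite mem_filter => /andP [Px Sx] ->.
by rewrite mem_filter; case/andP: (H x Sx Px) => -> ->.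
Qed.

Definition cc' (m a : nat) : nat := if a == 1 then m else a.-1.

Lemma ccK m a : 0 < a <= m -> cc' m (cc m a) = a.
Proof. by rewrite /cc /cc'; case: (a =P m) => Ha; case: eqP => //; lia. Qed.

Lemma cc'K m a : 0 < a <= m -> cc m (cc' m a) = a.
Proof. by rewrite /cc /cc'; case: (a =P 1) => Ha; case: eqP => //; lia. Qed.

Lemma cc_range m a : 0 < a <= m -> 0 < cc m a <= m.
Proof. by rewrite /cc; case: (a =P m); lia. Qed.

Lemma cc'_range m a : 0 < a <= m -> 0 < cc' m a <= m.
Proof. by rewrite /cc'; case: (a =P 1); lia. Qed.

Arguments ccK {m a} _. Arguments cc'K {m a} _. Arguments cc_range {m a} _. Arguments cc'_range {m a} _.

Lemma rot_perm m t : perm_eq t (iota 1 m) -> perm_eq (map (cc m) t) (iota 1 m).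
Proof.
move=> Ht.
have Hr x : x \in t -> 0 < x <= m by rewrite (perm_mem Ht) mem_iota; lia.
apply: uniq_perm; last 1 first.
- move=> x; apply/mapP/idP => [[y Hy ->]|Hx].
    by rewrite mem_iota; have := cc_range (Hr y Hy); lia.
  have Hx' : 0 < x <= m by move: Hx; rewrite mem_iota; lia.
  exists (cc' m x); last by rewrite cc'K.
  by rewrite (perm_mem Ht) mem_iota; have := cc'_range Hx'; lia.
- rewrite map_inj_in_uniq ?(perm_uniq Ht) ?iota_uniq //.
  by move=> a b Ha Hb E; rewrite -(ccK (Hr a Ha)) E ccK //; apply: Hr.
- exact: iota_uniq.
Qed.

Lemma rot_good m t : perm_eq t (iota 1 m) ->
  all (fp m) (prs (map (cc m) t)) = all (fp m) (prs t).
Proof.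
move=> Ht.
have Hr x : x \in t -> 0 < x <= m by rewrite (perm_mem Ht) mem_iota; lia.
rewrite prs_map all_map; apply: eq_in_all => [[a b]] /prs_mem /andP [Ha /mem_behead Hb].
rewrite /fp /=; congr negb; apply/eqP/eqP => [E|->] //.
by rewrite -(ccK (Hr b Hb)) E ccK // cc_range // Hr.
Qed.

Definition R m a := count (fun t => all (fp m) (prs t) && (head 0 t == a)) (permutations (iota 1 m)).

Lemma R_step m a : 0 < a <= m -> R m a <= R m (cc m a).
Proof.
move=> Ha; apply: (@count_le _ _ _ _ (map (cc m)) (map (cc' m))).
- exact: permutations_uniq.
- move=> t; rewrite mem_permutations => Ht /andP [Hg Hh].
  rewrite mem_permutations rot_perm // rot_good // Hg /=.
  case: t Ht Hh {Hg} => [|x t] Ht /=; last by move/eqP ->.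
  by move/eqP => E; move: Ha; rewrite -E.
- move=> t; rewrite mem_permutations => Ht _.
  rewrite -map_comp map_id_in // => x Hx /=; apply: ccK.
  by move: Hx; rewrite (perm_mem Ht) mem_iota; lia.
Qed.

Lemma R_mono m i k : 0 < i -> i + k <= m -> R m i <= R m (i + k).
Proof.
move=> Hi; elim: k => [|k IH] Hk; first by rewrite addn0.
apply: leq_trans (IH _) _; first lia.
have := R_step m (i + k); rewrite /cc; case: eqP; first lia.
by move=> _ H; rewrite addnS; apply: H; lia.
Qed.

Lemma R_const m a : 0 < a <= m -> R m a = R m 1.
Proof.
move=> Ha; apply/eqP; rewrite eqn_leq; apply/andP; split.
  apply: leq_trans (_ : R m m <= _).
    have := R_mono m a (m - a); rewrite subnKC; [apply|..]; lia.
  have := R_step m m; rewrite /cc eqxx; apply; lia.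
have := R_mono m 1 (a - 1); rewrite subnKC; [apply|..]; lia.
Qed.

Lemma split_head (L : seq nat) (S : seq (seq nat)) (P : pred (seq nat)) :
  uniq L -> (forall t, t \in S -> head 0 t \in L) ->
  count P S = \sum_(a <- L) count (fun t => P t && (head 0 t == a)) S.
Proof.
move=> UL; elim: S => [|x S IH] HS /=; first by rewrite big1.
under eq_bigr do rewrite /=.
rewrite big_split /= -IH; last by move=> t Ht; apply: HS; rewrite inE Ht orbT.
congr (_ + _).
rewrite (bigD1_seq (head 0 x)) //=; last by apply: HS; rewrite inE eqxx.
rewrite eqxx andbT big1 ?addn0 // => a /negbTE; rewrite eq_sym => ->.
by rewrite andbF.
Qed.

Lemma divB m : 0 < m -> m %| count (fun t => all (fp m) (prs t)) (permutations (iota 1 m)).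
Proof.
move=> Hm.
rewrite (@split_head (iota 1 m)) ?iota_uniq //; last first.
  move=> t; rewrite mem_permutations => Ht.
  case: t Ht => [|x t] Ht /=.
    by move/perm_size: Ht; rewrite size_iota /=; lia.
  by rewrite -(perm_mem Ht) inE eqxx.
rewrite (eq_big_seq (fun _ => R m 1)); last first.
  by move=> a; rewrite mem_iota => Ha; apply: R_const; lia.
by rewrite big_const_seq count_predT size_iota iter_addn_0 dvdn_mull.
Qed.

Arguments prs_mem {s a b} _. Arguments prs_split {s a b} _.
Definition ins m (t : seq nat) := let i := index 1 t in take i t ++ m.+1 :: drop i t.
Definition PA m (s : seq nat) := all ep (prs s) && ((m.+1, 1) \in prs s).

Lemma insE m s1 s2 : 1 \notin s1 -> ins m (s1 ++ 1 :: s2) = s1 ++ m.+1 :: 1 :: s2.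
Proof.
move=> H; rewrite /ins index_cat (negbTE H) /= ?eqxx addn0.
by rewrite take_size_cat // drop_size_cat.
Qed.

Lemma perm_ins m s1 r : perm_eq (s1 ++ m.+1 :: r) (iota 1 m.+1) = perm_eq (s1 ++ r) (iota 1 m).
Proof.
rewrite -[s1 ++ m.+1 :: r]/(s1 ++ [:: m.+1] ++ r) (perm_catCA s1 [:: m.+1] r).
rewrite (_ : iota 1 m.+1 = iota 1 m ++ [:: m.+1]); last by rewrite -(addn1 m) iotaD add1n addn1.
by rewrite perm_sym perm_catC /= perm_cons perm_sym.
Qed.

Lemma dA m : d_n1 m.+1 = count (PA m) (permutations (iota 1 m.+1)).
Proof.
rewrite /d_n1; apply: eq_in_count => s; rewrite mem_permutations => Hs.
rewrite /linear_arrangement Hs /= /PA cpE; congr (_ && _).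
apply/allP/allP => [H [a b] Hab | H i Hi].
  rewrite /ep /=; apply/eqP => Eb; subst b.
  have /andP [Ha Hb] := prs_mem Hab.
  have Hb' := mem_behead Hb.
  rewrite !(perm_mem Hs) !mem_iota in Ha Hb'.
  have Hai : a \in iota 1 m by rewrite mem_iota; lia.
  by have := H a Hai; rewrite cpE Hab.
by rewrite cpE; apply/negP => Hp; have := H _ Hp; rewrite /ep /= eqxx.
Qed.

Lemma countEq m : 0 < m ->
  count (PA m) (permutations (iota 1 m.+1)) =
  count (fun t => all (fp m) (prs t)) (permutations (iota 1 m)).
Proof.
move=> Hm; apply/eqP; rewrite eqn_leq; apply/andP; split.
  apply: (@count_le _ _ _ _ (rem m.+1) (ins m)); first exact: permutations_uniq.
    move=> s; rewrite mem_permutations => Hs /andP [Hg Hc].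
    have [s1 [s2 E]] := prs_split Hc; subst s.
    have U : uniq (s1 ++ m.+1 :: 1 :: s2) by rewrite (perm_uniq Hs) iota_uniq.
    move: (U); rewrite cat_uniq /= !inE !negb_or => /and3P [_ /and3P [Hn1s H1s _] _].
    have H0 : 0 \notin s1.
      by apply/negP => H0; move: Hs => /perm_mem/(_ 0); rewrite mem_cat H0 mem_iota.
    rewrite rem_cat_notin // mem_permutations -perm_ins Hs /= -key //.
  move=> s; rewrite mem_permutations => Hs /andP [Hg Hc].
  have [s1 [s2 E]] := prs_split Hc; subst s.
  have U : uniq (s1 ++ m.+1 :: 1 :: s2) by rewrite (perm_uniq Hs) iota_uniq.
  move: (U); rewrite cat_uniq /= !inE !negb_or => /and3P [_ /and3P [Hn1s H1s _] _].
  by rewrite rem_cat_notin // insE.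
apply: (@count_le _ _ _ _ (ins m) (rem m.+1)); first exact: permutations_uniq.
  move=> t; rewrite mem_permutations => Ht HQ.
  have H1 : 1 \in t by rewrite (perm_mem Ht) mem_iota; lia.
  move: Ht HQ; case/splitPr: H1 => s1 s2 Ht HQ.
  have U : uniq (s1 ++ 1 :: s2) by rewrite (perm_uniq Ht) iota_uniq.
  move: (U); rewrite cat_uniq /= => /and3P [_ /norP [H1s _] _].
  have Hn1s : m.+1 \notin s1.
    by apply/negP => H; move: Ht => /perm_mem/(_ m.+1); rewrite mem_cat H mem_iota; lia.
  have H0 : 0 \notin s1.
    by apply/negP => H; move: Ht => /perm_mem/(_ 0); rewrite mem_cat H mem_iota.
  have Hp : perm_eq (s1 ++ m.+1 :: 1 :: s2) (iota 1 m.+1) by rewrite perm_ins.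
  have U' : uniq (s1 ++ m.+1 :: 1 :: s2) by rewrite (perm_uniq Hp) iota_uniq.
  rewrite insE // mem_permutations Hp /= /PA key // HQ /=.
  by rewrite prs_cat mem_cat /= inE eqxx orbT.
move=> t; rewrite mem_permutations => Ht HQ.
have H1 : 1 \in t by rewrite (perm_mem Ht) mem_iota; lia.
move: Ht HQ; case/splitPr: H1 => s1 s2 Ht HQ.
have U : uniq (s1 ++ 1 :: s2) by rewrite (perm_uniq Ht) iota_uniq.
move: (U); rewrite cat_uniq /= => /and3P [_ /norP [H1s _] _].
have Hn1s : m.+1 \notin s1.
  by apply/negP => H; move: Ht => /perm_mem/(_ m.+1); rewrite mem_cat H mem_iota; lia.
by rewrite insE // rem_cat_notin.
Qed.

Theorem corollary4p10 : forall n : nat, 2 <= n -> n.-1 %| d_n1 n.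
Proof.
case=> [|m] // Hm /=.
rewrite dA countEq //; exact: divB.
Qed.
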